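(* Let $A_1=P(s_1,\dots,s_k)$ and $A_2=P(r_1,\dots,r_k)$ be non-ground, simple and covering atoms, each containing at least one compound term, and suppose $A_1$ and $A_2$ are unifiable. Then for every position $j\in\{1,\dots,k\}$, $s_j$ is a compound term if and only if $r_j$ is a compound term.
   Context: A compound term is a term that is neither a variable nor a constant. $\mathrm{Var}(E)$ denotes the set of variables of $E$. A literal is simple if each argument is a variable, a constant, or a term $f(u_1,\dots,u_n)$ with each $u_i$ a variable or a constant. A literal (or clause) $E$ is covering if every compound term $t$ occurring in $E$ satisfies $\mathrm{Var}(t)=\mathrm{Var}(E)$. *)

(* Defs.v *)
From Stdlib Require Import List Arith.
Import ListNotations.

(* Variables and function symbols are named by natural numbers.
   A constant is a function symbol applied to no arguments. *)
Inductive term : Type :=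
| Var (x : nat)
| Fn (f : nat) (args : list term).

Fixpoint subst (sigma : nat -> term) (t : term) : term :=
  match t with
  | Var x => sigma x
  | Fn f l => Fn f (map (subst sigma) l)
  end.

Definition is_var (t : term) : Prop := exists x, t = Var x.
Definition is_const (t : term) : Prop := exists c, t = Fn c [].
Definition is_compound (t : term) : Prop := ~ is_var t /\ ~ is_const t.

Inductive var_in (x : nat) : term -> Prop :=
| vi_var : var_in x (Var x)
| vi_fn : forall f l t, In t l -> var_in x t -> var_in x (Fn f l).

Inductive subterm (t : term) : term -> Prop :=
| st_refl : subterm t t
| st_fn : forall f l u, In u l -> subterm t u -> subterm t (Fn f l).

Record atom : Type := mkAtom { apred : nat; aargs : list term }.

Definition subst_atom (sigma : nat -> term) (A : atom) : atom :=
  mkAtom (apred A) (map (subst sigma) (aargs A)).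

Definition var_in_atom (x : nat) (A : atom) : Prop :=
  exists t, In t (aargs A) /\ var_in x t.

Definition occurs_in_atom (t : term) (A : atom) : Prop :=
  exists u, In u (aargs A) /\ subterm t u.

Definition ground_atom (A : atom) : Prop := forall x, ~ var_in_atom x A.

Definition simple_atom (A : atom) : Prop :=
  Forall (fun t => is_var t \/ is_const t \/
            exists f us, t = Fn f us /\ Forall (fun u => is_var u \/ is_const u) us)
         (aargs A).

Definition covering_atom (A : atom) : Prop :=
  forall t, occurs_in_atom t A -> is_compound t ->
    forall x, var_in x t <-> var_in_atom x A.

Definition has_compound (A : atom) : Prop :=
  exists t, occurs_in_atom t A /\ is_compound t.

Definition unifiable (A1 A2 : atom) : Prop :=
  exists sigma : nat -> term, subst_atom sigma A1 = subst_atom sigma A2.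

(* Main.v *)
Require Import Defs.
From Stdlib Require Import List Arith Lia.
Import ListNotations.

Fixpoint tsize (t : term) : nat :=
  match t with Var _ => 1 | Fn _ l => S (list_sum (map tsize l)) end.

Lemma in_le_sum (a : term) l : In a l -> tsize a <= list_sum (map tsize l).
Proof.
  induction l as [|b l IH]; simpl; [tauto|]. intros [->|H]; [lia|]. specialize (IH H); lia.
Qed.

Lemma var_size sigma y t : var_in y t -> tsize (sigma y) <= tsize (subst sigma t).
Proof.
  induction 1 as [|f l t Hin Hv IH]; simpl; [lia|].
  assert (tsize (subst sigma t) <= list_sum (map tsize (map (subst sigma) l))).
  { apply in_le_sum, in_map, Hin. } lia.
Qed.

Lemma var_size_lt sigma y t : var_in y t -> (forall z, t <> Var z) ->
  tsize (sigma y) < tsize (subst sigma t).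
Proof.
  intros H Hn. inversion H; subst.
  - exfalso; eapply Hn; reflexivity.
  - simpl. assert (tsize (sigma y) <= tsize (subst sigma t0)) by (apply var_size; auto).
    assert (tsize (subst sigma t0) <= list_sum (map tsize (map (subst sigma) l))).
    { apply in_le_sum, in_map; auto. } lia.
Qed.

Lemma subterm_var t u x : subterm t u -> var_in x t -> var_in x u.
Proof. induction 1; auto. intros; econstructor; eauto. Qed.

Lemma subterm_Var t z : subterm t (Var z) -> t = Var z.
Proof. intros H; inversion H; auto. Qed.

Lemma subterm_const t c : subterm t (Fn c []) -> t = Fn c [].
Proof. intros H; inversion H; subst; auto. simpl in *; tauto. Qed.

Lemma var_in_const x c : ~ var_in x (Fn c []).
Proof. intros H; inversion H; subst; simpl in *; tauto. Qed.

Lemma key P s r sigma :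
  simple_atom (mkAtom P s) -> simple_atom (mkAtom P r) ->
  covering_atom (mkAtom P s) -> covering_atom (mkAtom P r) ->
  has_compound (mkAtom P r) ->
  map (subst sigma) s = map (subst sigma) r ->
  forall j, j < length s ->
    is_compound (nth j s (Var 0)) -> is_compound (nth j r (Var 0)).
Proof.
  intros Hss Hsr Hcs Hcr [t [[u [Hu Hst]] Htc]] Heq j Hj Hcj.
  assert (Hlen : length s = length r).
  { rewrite <- (length_map (subst sigma) s), <- (length_map (subst sigma) r), Heq; auto. }
  assert (Hsub : subst sigma (nth j s (Var 0)) = subst sigma (nth j r (Var 0))).
  { pose proof (f_equal (fun L => nth j L (subst sigma (Var 0))) Heq) as E; cbv beta in E.
    rewrite !map_nth in E. exact E. }
  assert (Hjin : In (nth j s (Var 0)) s) by (apply nth_In; auto).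
  assert (Hrin : In (nth j r (Var 0)) r) by (apply nth_In; lia).
  assert (Hcovj : forall y, var_in_atom y (mkAtom P s) -> var_in y (nth j s (Var 0))).
  { intros y Hy. apply (Hcs (nth j s (Var 0))); auto. exists (nth j s (Var 0)); split; auto; constructor. }
  destruct Hcj as [Hnv Hnc].
  destruct (nth j s (Var 0)) as [x0|f l] eqn:Esj.
  { exfalso; apply Hnv; eexists; eauto. }
  destruct l as [|a l]. { exfalso; apply Hnc; eexists; eauto. }
  split.
  - intros [x Ex]. rewrite Ex in Hsub, Hrin. simpl in Hsub.
    assert (Hxt : var_in x t).
    { apply (Hcr t); auto. exists u; auto. exists (Var x); split; [exact Hrin|constructor]. }
    assert (Hxu : var_in x u) by (eapply subterm_var; eauto).
    unfold simple_atom in Hsr; rewrite Forall_forall in Hsr.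
    destruct (Hsr u Hu) as [[z ->]|[[c ->]|[g [us [-> Hus]]]]].
    + apply subterm_Var in Hst; subst. apply (proj1 Htc); eexists; eauto.
    + apply subterm_const in Hst; subst. apply (proj2 Htc); eexists; eauto.
    +
      assert (Hxus : In (Var x) us).
      { inversion Hxu; subst. rewrite Forall_forall in Hus.
        destruct (Hus _ H1) as [[z ->]|[c ->]].
        - inversion H2; subst; auto.
        - exfalso; eapply var_in_const; eauto. }
      destruct (In_nth _ _ (Var 0) Hu) as [i [Hi Ei]]; simpl in Hi, Ei.
      assert (Hsi : In (nth i s (Var 0)) s) by (apply nth_In; simpl in Hi; lia).
      assert (Hsubi : subst sigma (nth i s (Var 0)) = subst sigma (nth i r (Var 0))).
      { pose proof (f_equal (fun L => nth i L (subst sigma (Var 0))) Heq) as E; cbv beta in E.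
        rewrite !map_nth in E. exact E. }
      rewrite Ei in Hsubi.
      assert (Hltx : tsize (sigma x) < tsize (subst sigma (Fn g us))).
      { apply var_size_lt; auto. discriminate. }
      unfold simple_atom in Hss; rewrite Forall_forall in Hss.
      destruct (Hss _ Hsi) as [[y Ey]|[[c Ec]|[h [vs [Ev Hvs]]]]].
      * rewrite Ey in Hsubi, Hsi. simpl in Hsubi.
        assert (Hy : var_in y (Fn f (a :: l))).
        { apply Hcovj. exists (Var y); split; auto; constructor. }
        assert (tsize (sigma y) < tsize (subst sigma (Fn f (a :: l))))
          by (apply var_size_lt; auto; discriminate).
        assert (E2: tsize (subst sigma (Fn f (a::l))) = tsize (sigma x)) by (rewrite <- Hsub; reflexivity).
        assert (E3: tsize (sigma y) = tsize (subst sigma (Fn g us))) by (rewrite Hsubi; reflexivity). lia.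
      * rewrite Ec in Hsubi. simpl in Hsubi. injection Hsubi as _ Hm.
        destruct us; [inversion Hxus| discriminate].
      * rewrite Ev in Hsubi, Hsi. simpl in Hsubi. injection Hsubi as _ Hm.
        destruct (In_nth _ _ (Var 0) Hxus) as [m [Hm1 Em]].
        assert (Hlv : length vs = length us).
        { rewrite <- (length_map (subst sigma) vs), <- (length_map (subst sigma) us), Hm; auto. }
        assert (Hv : subst sigma (nth m vs (Var 0)) = sigma x).
        { change (sigma x) with (subst sigma (Var x)). rewrite <- Em.
          pose proof (f_equal (fun L => nth m L (subst sigma (Var 0))) Hm) as E; cbv beta in E.
          rewrite !map_nth in E. exact E. }
        assert (Hvin : In (nth m vs (Var 0)) vs) by (apply nth_In; lia).
        rewrite Forall_forall in Hvs.
        destruct (Hvs _ Hvin) as [[y Ey]|[c Ec]].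
        -- rewrite Ey in Hv, Hvin. simpl in Hv.
           assert (Hy : var_in y (Fn f (a :: l))).
           { apply Hcovj. exists (Fn h vs); split; auto.
             econstructor; eauto; constructor. }
           assert (tsize (sigma y) < tsize (subst sigma (Fn f (a :: l))))
             by (apply var_size_lt; auto; discriminate).
           assert (E2: tsize (subst sigma (Fn f (a::l))) = tsize (sigma x)) by (rewrite <- Hsub; reflexivity).
           rewrite Hv in H. lia.
        -- rewrite Ec in Hv. simpl in Hv. rewrite <- Hv in Hsub. discriminate.
  - intros [c Ec]. rewrite Ec in Hsub. discriminate.
Qed.

Theorem mainTheorem4 (k P : nat) (s r : list term) :
  length s = k -> length r = k ->
  ~ ground_atom (mkAtom P s) -> ~ ground_atom (mkAtom P r) ->
  simple_atom (mkAtom P s) -> simple_atom (mkAtom P r) ->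
  covering_atom (mkAtom P s) -> covering_atom (mkAtom P r) ->
  has_compound (mkAtom P s) -> has_compound (mkAtom P r) ->
  unifiable (mkAtom P s) (mkAtom P r) ->
  forall j, j < k ->
    (is_compound (nth j s (Var 0)) <-> is_compound (nth j r (Var 0))).
Proof.
  intros Hs Hr _ _ Hss Hsr Hcs Hcr Hhs Hhr [sigma Hu] j Hj.
  unfold subst_atom in Hu; simpl in Hu. injection Hu as Hu.
  split.
  - apply (key P s r sigma); auto; lia.
  - apply (key P r s sigma); auto; lia.
Qed.
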